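(* Fix $m\ge1$ and $\omega\in\mathbb Z\setminus\{0\}$. There exist constants $c_\omega>0$ and $C_{m,\omega}>0$ such that for every smooth closed immersed planar curve $\gamma$ of length $1$ with turning number $\omega$, $$\int_\gamma F_0^2\,ds\ \ge\ c_\omega\,\mathcal P-C_{m,\omega}E_m[\gamma]^2,$$ where $\kappa=2\pi\omega$, $F_0:=(-1)^{m+1}(k_{s^{2m+2}}+\kappa^2k_{s^{2m}})$ and $\mathcal P:=\int_\gamma k_{s^{2m+2}}^2\,ds$.
   Context: $s$ arclength, $k$ signed curvature, $k_{s^j}$ its $j$-th arclength derivative, $E_m[\gamma]=\frac12\int_\gamma k_{s^m}^2ds$, turning number $\frac1{2\pi}\int_\gamma k\,ds$. *)

(* Defs.v *)
From Stdlib Require Import Reals.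
From Coquelicot Require Import Coquelicot.
Open Scope R_scope.

Definition smooth (f : R -> R) : Prop := forall (n : nat) (t : R), ex_derive_n f n t.

(** A closed planar curve gamma = (gx, gy) of length 1 parametrized by arclength s in R,
    1-periodic (closed), smooth, with unit speed (immersed, arclength parametrization). *)
Definition closed_unit_length_arclength_curve (gx gy : R -> R) : Prop :=
  smooth gx /\ smooth gy /\
  (forall s, gx (s + 1) = gx s /\ gy (s + 1) = gy s) /\
  (forall s, (Derive gx s) ^ 2 + (Derive gy s) ^ 2 = 1).

Definition curvature (gx gy : R -> R) (s : R) : R :=
  Derive gx s * Derive_n gy 2 s - Derive gy s * Derive_n gx 2 s.

Definition kd (gx gy : R -> R) (j : nat) : R -> R := Derive_n (curvature gx gy) j.

Definition turning_number (gx gy : R -> R) : R :=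
  / (2 * PI) * RInt (curvature gx gy) 0 1.

Definition Energy (m : nat) (gx gy : R -> R) : R :=
  / 2 * RInt (fun s => (kd gx gy m s) ^ 2) 0 1.

Definition F0 (m : nat) (omega : Z) (gx gy : R -> R) (s : R) : R :=
  (-1) ^ (m + 1) *
  (kd gx gy (2 * m + 2) s + (2 * PI * IZR omega) ^ 2 * kd gx gy (2 * m) s).

Definition Pterm (m : nat) (gx gy : R -> R) : R :=
  RInt (fun s => (kd gx gy (2 * m + 2) s) ^ 2) 0 1.

(* Main.v *)
Require Import Defs.
From Stdlib Require Import Reals Lra Lia Psatz.
From Coquelicot Require Import Coquelicot.
Open Scope R_scope.

Lemma smooth_ex f : smooth f -> forall n t, ex_derive (Derive_n f n) t.
Proof. intros H n t. exact (H (S n) t). Qed.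

Lemma smooth_of f : (forall n t, ex_derive (Derive_n f n) t) -> smooth f.
Proof. intros H [|n] t; simpl; auto. Qed.

Lemma smooth_exd f : smooth f -> forall t, ex_derive f t.
Proof. intros H t. exact (H 1%nat t). Qed.

Lemma smooth_D f : smooth f -> smooth (Derive f).
Proof.
  intros H. apply smooth_of. intros n t.
  apply (ex_derive_ext (Derive_n f (S n))).
  - intros y. change (Derive f) with (Derive_n f 1). rewrite (Derive_n_comp f n 1). rewrite Nat.add_1_r. reflexivity.
  - apply smooth_ex; auto.
Qed.

Lemma smooth_Dn f n : smooth f -> smooth (Derive_n f n).
Proof. intros H; induction n; simpl; auto. apply smooth_D; auto. Qed.

Lemma smooth_ext f g : (forall t, f t = g t) -> smooth f -> smooth g.
Proof. intros E H n t. apply (ex_derive_n_ext f g n t E (H n t)). Qed.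

Lemma smooth_plus f g : smooth f -> smooth g -> smooth (fun x => f x + g x).
Proof.
  intros Hf Hg n t. apply ex_derive_n_plus; apply filter_forall; intros; auto.
Qed.

Lemma smooth_scal f c : smooth f -> smooth (fun x => c * f x).
Proof.
  intros Hf. apply smooth_of. intros n t.
  apply (ex_derive_ext (fun x => c * Derive_n f n x)).
  - intros y. rewrite Derive_n_scal_l. reflexivity.
  - apply ex_derive_scal. apply smooth_ex; auto.
Qed.

Lemma smooth_minus f g : smooth f -> smooth g -> smooth (fun x => f x - g x).
Proof.
  intros Hf Hg. apply (smooth_ext (fun x => f x + (-1) * g x)).
  - intros; ring.
  - apply smooth_plus; auto. apply smooth_scal; auto.
Qed.

Lemma smooth_const c : smooth (fun _ => c).
Proof.
  apply smooth_of. intros n t. apply (ex_derive_ext (fun _ => match n with O => c | _ => 0 end)).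
  - intros y. destruct n; [reflexivity|]. rewrite Derive_n_const. reflexivity.
  - apply ex_derive_const.
Qed.

Lemma exdS h n t : (forall y, ex_derive h y) -> ex_derive_n (Derive h) n t -> ex_derive_n h (S n) t.
Proof.
  intros H1 H2. destruct n as [|n]; simpl; auto.
  simpl in H2. apply (ex_derive_ext (Derive_n (Derive h) n)); auto.
  intros y. change (Derive h) with (Derive_n h 1). rewrite (Derive_n_comp h n 1). rewrite Nat.add_1_r. reflexivity.
Qed.

Lemma smooth_mult_aux n : forall f g, smooth f -> smooth g ->
  forall k, (k <= n)%nat -> forall t, ex_derive_n (fun x => f x * g x) k t.
Proof.
  induction n as [|n IH]; intros f g Hf Hg k Hk t.
  - assert (k = 0%nat) by lia; subst; simpl; auto.
  - destruct (Nat.le_gt_cases k n) as [Hk'|Hk']. apply IH; auto.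
    assert (k = S n) by lia; subst.
    apply exdS.
    + intros y. apply ex_derive_mult; apply smooth_exd; auto.
    + apply (ex_derive_n_ext (fun x => Derive f x * g x + f x * Derive g x)).
      * intros y. rewrite Derive_mult; auto; apply smooth_exd; auto.
      * apply ex_derive_n_plus; apply filter_forall; intros y j Hj;
        apply IH; auto; apply smooth_D; auto.
Qed.

Lemma smooth_mult f g : smooth f -> smooth g -> smooth (fun x => f x * g x).
Proof. intros Hf Hg n t. apply (smooth_mult_aux n); auto. Qed.

Definition per (f : R -> R) := forall s, f (s + 1) = f s.

Lemma per_Dn f n : per f -> per (Derive_n f n).
Proof.
  intros H s. rewrite <- Derive_n_comp_trans. apply Derive_n_ext. intros; apply H.
Qed.

Lemma curv_smooth gx gy : closed_unit_length_arclength_curve gx gy -> smooth (curvature gx gy).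
Proof.
  intros [Hx [Hy _]]. unfold curvature.
  apply smooth_minus; apply smooth_mult.
  apply smooth_D; exact Hx. apply (smooth_Dn _ 2); exact Hy.
  apply smooth_D; exact Hy. apply (smooth_Dn _ 2); exact Hx.
Qed.

Lemma curv_per gx gy : closed_unit_length_arclength_curve gx gy -> per (curvature gx gy).
Proof.
  intros [Hx [Hy [Hp _]]]. unfold curvature.
  assert (px : per gx) by (intros s; apply Hp).
  assert (py : per gy) by (intros s; apply Hp).
  assert (p1 : forall s, Derive gx (s+1) = Derive gx s) by exact (per_Dn gx 1 px).
  assert (p2 : forall s, Derive gy (s+1) = Derive gy s) by exact (per_Dn gy 1 py).
  intros s. rewrite p1, p2, (per_Dn gx 2 px), (per_Dn gy 2 py).
  reflexivity.
Qed.

Lemma kd_smooth gx gy j : closed_unit_length_arclength_curve gx gy -> smooth (kd gx gy j).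
Proof. intros H. apply smooth_Dn, curv_smooth; auto. Qed.

Lemma kd_per gx gy j : closed_unit_length_arclength_curve gx gy -> per (kd gx gy j).
Proof. intros H. apply per_Dn, curv_per; auto. Qed.

Lemma kd_S gx gy j s : kd gx gy (S j) s = Derive (kd gx gy j) s.
Proof. reflexivity. Qed.

Lemma cont_of_der (g : R -> R) x : ex_derive g x -> continuous g x.
Proof. intros H. exact (ex_derive_continuous g x H). Qed.

Lemma smooth_cont f x : smooth f -> continuous f x.
Proof. intros H. exact (ex_derive_continuous f x (smooth_exd f H x)). Qed.

Lemma smooth_isd f x : smooth f -> is_derive f x (Derive f x).
Proof. intros H. apply Derive_correct, smooth_exd; auto. Qed.

Ltac fixeq := match goal with |- @eq _ ?a ?b => change (@eq R a b) end.
Ltac rint_atoms := repeat match goal with |- context [RInt ?f ?a ?b] =>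
  let X := fresh "X" in set (X := RInt f a b); clearbody X; change R in X end.
Ltac rring := fixeq; rint_atoms; ring.
Ltac rint_atoms_all := repeat match goal with
  | |- context [RInt ?f ?a ?b] => let X := fresh "X" in set (X := RInt f a b) in *; clearbody X; change R in X
  | H : context [RInt ?f ?a ?b] |- _ => let X := fresh "X" in set (X := RInt f a b) in *; clearbody X; change R in X
  end.

Lemma RInt_plusR (f g : R -> R) a b : ex_RInt f a b -> ex_RInt g a b -> RInt (fun x => f x + g x) a b = RInt f a b + RInt g a b.
Proof. intros H H0. exact (RInt_plus f g a b H H0). Qed.
Lemma RInt_minusR (f g : R -> R) a b : ex_RInt f a b -> ex_RInt g a b -> RInt (fun x => f x - g x) a b = RInt f a b - RInt g a b.
Proof. intros H H0. exact (RInt_minus f g a b H H0). Qed.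
Lemma RInt_scalR (f : R -> R) c a b : ex_RInt f a b -> RInt (fun x => c * f x) a b = c * RInt f a b.
Proof. intros H. exact (RInt_scal f a b c H). Qed.
Lemma RInt_constR c a b : RInt (fun _ => c) a b = (b - a) * c.
Proof. exact (RInt_const a b c). Qed.

Lemma exRI (f : R -> R) a b : (forall x, continuous f x) -> ex_RInt f a b.
Proof. intros H. apply (ex_RInt_continuous (V:=R_CompleteNormedModule)). intros; auto. Qed.

Lemma RInt_le_c (f g : R -> R) a b : a <= b -> (forall x, continuous f x) -> (forall x, continuous g x) ->
  (forall x, a <= x <= b -> f x <= g x) -> RInt f a b <= RInt g a b.
Proof. intros. apply RInt_le; auto; try apply exRI; auto. intros; apply H2; lra. Qed.

Lemma RInt_ge0_c (f : R -> R) a b : a <= b -> (forall x, continuous f x) ->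
  (forall x, a <= x <= b -> 0 <= f x) -> 0 <= RInt f a b.
Proof.
  intros. assert (E: RInt (fun _ => 0) a b = 0).
  { rewrite RInt_constR. apply Rmult_0_r. }
  rewrite <- E at 1. apply RInt_le_c; auto.
  intros; apply continuous_const.
Qed.

Lemma RInt_sub01 (f : R -> R) a b : 0 <= a -> a <= b -> b <= 1 -> (forall x, continuous f x) ->
  (forall x, 0 <= x <= 1 -> 0 <= f x) -> RInt f a b <= RInt f 0 1.
Proof.
  intros. rewrite <- (RInt_Chasles f 0 a 1) by (apply exRI; auto).
  rewrite <- (RInt_Chasles f a b 1) by (apply exRI; auto).
  assert (0 <= RInt f 0 a) by (apply RInt_ge0_c; auto; intros; apply H3; lra).
  assert (0 <= RInt f b 1) by (apply RInt_ge0_c; auto; intros; apply H3; lra).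
  unfold plus; simpl. lra.
Qed.

Lemma cont_sq (f : R -> R) x : continuous f x -> continuous (fun y => f y ^ 2) x.
Proof.
  intros H. apply (continuous_comp f (fun z => z ^ 2)); auto.
  apply cont_of_der. auto_derive. auto.
Qed.

Lemma CS (g : R -> R) s : 0 <= s <= 1 -> (forall x, continuous g x) ->
  (RInt g 0 s) ^ 2 <= RInt (fun x => g x ^ 2) 0 s.
Proof.
  intros Hs Hg. set (M := RInt g 0 s).
  assert (H0 : 0 <= RInt (fun x => (g x - M) ^ 2) 0 s).
  { apply RInt_ge0_c; try lra. intros; apply cont_sq. apply (continuous_minus g (fun _ => M)); auto. apply continuous_const.
    intros; apply pow2_ge_0. }
  assert (E : RInt (fun x => (g x - M) ^ 2) 0 s = RInt (fun x => g x ^ 2) 0 s - 2 * M * M + s * M ^ 2).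
  { rewrite (RInt_ext _ (fun x => (g x ^ 2 + (-2 * M) * g x) + M ^ 2)) by (intros; fixeq; ring).
    rewrite RInt_plusR, RInt_plusR, RInt_scalR, RInt_constR.
    fold M. fixeq. ring.
    all: try apply exRI; intros; try apply cont_sq; auto; try apply continuous_const.
    apply (continuous_scal_r (-2 * M) g); auto.
    apply (continuous_plus (fun y => g y ^ 2) (fun y => -2 * M * g y)). apply cont_sq; auto.
    apply (continuous_scal_r (-2 * M) g); auto. }
  rewrite E in H0. assert (0 <= M ^ 2) by apply pow2_ge_0. nra.
Qed.

Lemma cont_plus (f g : R -> R) x : continuous f x -> continuous g x -> continuous (fun y => f y + g y) x.
Proof. exact (continuous_plus f g x). Qed.
Lemma cont_minus (f g : R -> R) x : continuous f x -> continuous g x -> continuous (fun y => f y - g y) x.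
Proof. exact (continuous_minus f g x). Qed.
Lemma cont_mult (f g : R -> R) x : continuous f x -> continuous g x -> continuous (fun y => f y * g y) x.
Proof. exact (continuous_mult f g x). Qed.
Lemma cont_const (c : R) x : continuous (fun _ : R => c) x.
Proof. exact (continuous_const (U:=R_UniformSpace) c x). Qed.
Lemma cont_id x : continuous (fun y : R => y) x.
Proof. exact (continuous_id x). Qed.
Lemma cont_abs (f : R -> R) x : continuous f x -> continuous (fun y => Rabs (f y)) x.
Proof. exact (continuous_Rabs_comp f x). Qed.
Lemma cont_opp (f : R -> R) x : continuous f x -> continuous (fun y => - f y) x.
Proof. exact (continuous_opp f x). Qed.
Lemma cont_pow (f : R -> R) n x : continuous f x -> continuous (fun y => f y ^ n) x.
Proof.
  intros H. apply (continuous_comp f (fun z => z ^ n)); auto.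
  apply cont_of_der. auto_derive. auto.
Qed.
Lemma cont_cos (f : R -> R) x : continuous f x -> continuous (fun y => cos (f y)) x.
Proof.
  intros H. apply (continuous_comp f cos); auto.
  apply cont_of_der. auto_derive. auto.
Qed.
Lemma cont_sin (f : R -> R) x : continuous f x -> continuous (fun y => sin (f y)) x.
Proof.
  intros H. apply (continuous_comp f sin); auto.
  apply cont_of_der. auto_derive. auto.
Qed.

Lemma Rabs_le_inv a b : Rabs a <= b -> - b <= a <= b.
Proof. unfold Rabs; destruct (Rcase_abs a); lra. Qed.

Lemma cont_cos0 x : continuous cos x.
Proof. apply cont_of_der. auto_derive. auto. Qed.
Lemma cont_sin0 x : continuous sin x.
Proof. apply cont_of_der. auto_derive. auto. Qed.

Ltac cont := repeat match goal with
| |- continuous (fun _ => ?c) _ => apply cont_const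
| |- continuous (fun y => y) _ => apply cont_id
| |- continuous (fun y => _ + _) _ => apply cont_plus
| |- continuous (fun y => _ - _) _ => apply cont_minus
| |- continuous (fun y => _ * _) _ => apply cont_mult
| |- continuous (fun y => - _) _ => apply cont_opp
| |- continuous (fun y => Rabs _) _ => apply cont_abs
| |- continuous (fun y => _ ^ _) _ => apply cont_pow
| |- continuous (fun y => cos _) _ => apply cont_cos
| |- continuous (fun y => sin _) _ => apply cont_sin
| |- continuous (Rmult ?a) ?x => change (continuous (fun y => a * y) x)
| |- continuous (Rplus ?a) ?x => change (continuous (fun y => a + y) x)
| |- continuous (Rminus ?a) ?x => change (continuous (fun y => a - y) x)
| |- continuous cos _ => apply cont_cos0
| |- continuous sin _ => apply cont_sin0
end; try (solve [auto]).

Lemma ftc (F f : R -> R) a b : (forall x, is_derive F x (f x)) -> (forall x, continuous f x) ->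
  RInt f a b = F b - F a.
Proof.
  intros H1 H2. apply is_RInt_unique. exact (is_RInt_derive F f a b (fun x _ => H1 x) (fun x _ => H2 x)).
Qed.

Lemma byparts (F dF G dG : R -> R) a b :
  (forall x, is_derive F x (dF x)) -> (forall x, is_derive G x (dG x)) ->
  (forall x, continuous dF x) -> (forall x, continuous dG x) ->
  RInt (fun x => dF x * G x) a b = F b * G b - F a * G a - RInt (fun x => F x * dG x) a b.
Proof.
  intros H1 H2 H3 H4.
  assert (cF : forall x, continuous F x) by (intros; apply cont_of_der; eexists; eauto).
  assert (cG : forall x, continuous G x) by (intros; apply cont_of_der; eexists; eauto).
  assert (E : RInt (fun x => dF x * G x + F x * dG x) a b = F b * G b - F a * G a).
  { apply (ftc (fun x => F x * G x)). intros. apply (Derive.is_derive_mult F G); auto.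
    intros; cont. }
  rewrite RInt_plusR in E by (apply exRI; intros; cont). lra.
Qed.

Lemma RInt_abs_sub (f : R -> R) s t : 0 <= s <= 1 -> 0 <= t <= 1 -> (forall x, continuous f x) ->
  Rabs (RInt f t s) <= RInt (fun x => Rabs (f x)) 0 1.
Proof.
  intros Hs Ht Hf.
  destruct (Rle_lt_dec t s).
  - eapply Rle_trans. apply abs_RInt_le; auto. apply exRI; auto.
    apply RInt_sub01; try lra. intros; cont. intros; apply Rabs_pos.
  - rewrite <- (opp_RInt_swap f s t) by (apply exRI; auto).
    change (Rabs (- RInt f s t) <= RInt (fun x => Rabs (f x)) 0 1). rewrite Rabs_Ropp.
    eapply Rle_trans. apply abs_RInt_le; try lra. apply exRI; auto.
    apply RInt_sub01; try lra. intros; cont. intros; apply Rabs_pos.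
Qed.

Lemma poincare (g dg : R -> R) : (forall x, is_derive g x (dg x)) -> (forall x, continuous dg x) ->
  RInt g 0 1 = 0 -> forall s, 0 <= s <= 1 -> Rabs (g s) <= RInt (fun x => Rabs (dg x)) 0 1.
Proof.
  intros H1 H2 H0 s Hs. set (M := RInt (fun x => Rabs (dg x)) 0 1).
  assert (cg : forall x, continuous g x) by (intros; apply cont_of_der; eexists; eauto).
  assert (D : forall t, 0 <= t <= 1 -> Rabs (g s - g t) <= M).
  { intros t Ht. rewrite <- (ftc g dg t s) by auto. apply RInt_abs_sub; auto. }
  assert (L1 : RInt (fun _ => g s - M) 0 1 <= RInt g 0 1).
  { apply RInt_le_c; try lra. intros; cont. auto. intros t Ht. specialize (D t Ht).
    apply Rabs_le_inv in D. lra. }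
  assert (L2 : RInt g 0 1 <= RInt (fun _ => g s + M) 0 1).
  { apply RInt_le_c; try lra. auto. intros; cont. intros t Ht. specialize (D t Ht).
    apply Rabs_le_inv in D. lra. }
  rewrite RInt_constR in L1, L2. apply Rabs_le. lra.
Qed.

Definition hd gx gy (K : R) (j : nat) : R -> R :=
  fun s => kd gx gy j s - match j with O => K | _ => 0 end.

Lemma kd_isd gx gy j x : closed_unit_length_arclength_curve gx gy ->
  is_derive (kd gx gy j) x (kd gx gy (S j) x).
Proof. intros H. apply smooth_isd. apply kd_smooth; auto. Qed.

Lemma kd_cont gx gy j x : closed_unit_length_arclength_curve gx gy -> continuous (kd gx gy j) x.
Proof. intros H. apply smooth_cont. apply kd_smooth; auto. Qed.

Lemma hd_der gx gy K j x : closed_unit_length_arclength_curve gx gy ->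
  is_derive (hd gx gy K j) x (kd gx gy (S j) x).
Proof.
  intros H. unfold hd. auto_derive.
  - exists (kd gx gy (S j) x). apply kd_isd; auto.
  - rewrite Rmult_1_l. reflexivity.
Qed.

Lemma hd_cont gx gy K j x : closed_unit_length_arclength_curve gx gy -> continuous (hd gx gy K j) x.
Proof. intros H. unfold hd. cont. apply kd_cont; auto. Qed.

Lemma kd_ends gx gy j : closed_unit_length_arclength_curve gx gy -> kd gx gy j 1 = kd gx gy j 0.
Proof. intros H. pose proof (kd_per gx gy j H 0) as E. rewrite Rplus_0_l in E. exact E. Qed.

Lemma hd_mean gx gy K j : closed_unit_length_arclength_curve gx gy ->
  RInt (curvature gx gy) 0 1 = K -> RInt (hd gx gy K j) 0 1 = 0.
Proof.
  intros H HK. destruct j as [|j].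
  - unfold hd. rewrite RInt_minusR. rewrite RInt_constR.
    change (RInt (kd gx gy 0) 0 1) with (RInt (curvature gx gy) 0 1).
    rewrite HK. fixeq; ring.
    apply exRI; intros; apply kd_cont; auto. apply exRI; intros; cont.
  - unfold hd. rewrite (RInt_ext _ (kd gx gy (S j))) by (intros; fixeq; ring).
    rewrite (ftc (kd gx gy j) (kd gx gy (S j))). rewrite kd_ends; auto; fixeq; ring.
    intros; apply kd_isd; auto. intros; apply kd_cont; auto.
Qed.

Lemma chain gx gy K m : closed_unit_length_arclength_curve gx gy ->
  RInt (curvature gx gy) 0 1 = K -> (1 <= m)%nat ->
  forall d, (d < m)%nat -> forall s, 0 <= s <= 1 ->
  Rabs (hd gx gy K (m - 1 - d) s) <= RInt (fun x => Rabs (kd gx gy m x)) 0 1.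
Proof.
  intros H HK Hm. induction d as [|d IH]; intros Hd s Hs.
  - rewrite Nat.sub_0_r.
    replace (RInt (fun x => Rabs (kd gx gy m x)) 0 1) with (RInt (fun x => Rabs (kd gx gy (S (m - 1)) x)) 0 1).
    apply (poincare _ (kd gx gy (S (m-1)))); auto.
    intros; apply hd_der; auto. intros; apply kd_cont; auto. apply hd_mean; auto.
    replace (S (m - 1)) with m by lia. reflexivity.
  - set (j := (m - 1 - S d)%nat).
    assert (Ej : S j = (m - 1 - d)%nat) by (unfold j; lia).
    eapply Rle_trans.
    apply (poincare _ (kd gx gy (S j))); auto.
    intros; apply hd_der; auto. intros; apply kd_cont; auto. apply hd_mean; auto.
    apply Rle_trans with (RInt (fun _ => RInt (fun x => Rabs (kd gx gy m x)) 0 1) 0 1).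
    2:{ rewrite RInt_constR. lra. }
    apply RInt_le_c; try lra. intros; cont. apply kd_cont; auto. intros; apply cont_const.
    intros x Hx. specialize (IH ltac:(lia) x Hx). rewrite <- Ej in IH.
    unfold hd in IH. rewrite Rminus_0_r in IH. exact IH.
Qed.

Lemma Hbound gx gy K m : closed_unit_length_arclength_curve gx gy ->
  RInt (curvature gx gy) 0 1 = K -> (1 <= m)%nat ->
  forall s, 0 <= s <= 1 -> (RInt (hd gx gy K 0) 0 s) ^ 2 <= 2 * Energy m gx gy.
Proof.
  intros H HK Hm s Hs. set (M := RInt (fun x => Rabs (kd gx gy m x)) 0 1).
  assert (B : Rabs (RInt (hd gx gy K 0) 0 s) <= M).
  { eapply Rle_trans. apply RInt_abs_sub; try lra. intros; apply hd_cont; auto.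
    apply Rle_trans with (RInt (fun _ => M) 0 1).
    2:{ rewrite RInt_constR. lra. }
    apply RInt_le_c; try lra. intros; cont. apply hd_cont; auto. intros; apply cont_const.
    intros x Hx. pose proof (chain gx gy K m H HK Hm (m - 1) ltac:(lia) x Hx) as C.
    replace (m - 1 - (m - 1))%nat with 0%nat in C by lia. exact C. }
  eapply Rle_trans. apply pow_maj_Rabs. exact B.
  assert (E : RInt (fun x => Rabs (kd gx gy m x) ^ 2) 0 1 = RInt (fun s0 => kd gx gy m s0 ^ 2) 0 1).
  { apply RInt_ext. intros. fixeq. apply pow2_abs. }
  unfold Energy. rewrite <- E.
  apply Rle_trans with (RInt (fun x => Rabs (kd gx gy m x) ^ 2) 0 1).
  apply CS; try lra. intros; cont. apply kd_cont; auto.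
  lra.
Qed.

Lemma Dfun (f : R -> R) x l : is_derive f x l -> Derive (fun y => f y) x = l.
Proof. intros H. exact (is_derive_unique f x l H). Qed.

Definition Hf gx gy K (s : R) : R := RInt (hd gx gy K 0) 0 s.
Definition phi gx gy K (s : R) : R := K * s + Hf gx gy K s.

Lemma Hf_der gx gy K x : closed_unit_length_arclength_curve gx gy ->
  is_derive (Hf gx gy K) x (hd gx gy K 0 x).
Proof.
  intros H. unfold Hf. apply (is_derive_RInt (V:=R_NormedModule) _ _ 0).
  apply filter_forall. intros b. apply (RInt_correct (V:=R_CompleteNormedModule)). apply exRI. intros; apply hd_cont; auto.
  apply hd_cont; auto.
Qed.

Lemma Hf_cont gx gy K x : closed_unit_length_arclength_curve gx gy -> continuous (Hf gx gy K) x.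
Proof. intros H. apply cont_of_der. eexists. apply Hf_der; auto. Qed.

Lemma phi_der gx gy K x : closed_unit_length_arclength_curve gx gy ->
  is_derive (phi gx gy K) x (curvature gx gy x).
Proof.
  intros H. unfold phi. pose proof (Hf_der gx gy K x H) as D.
  auto_derive. exists (hd gx gy K 0 x). auto.
  rewrite (Dfun _ _ _ D). unfold hd. change (kd gx gy 0 x) with (curvature gx gy x). lra.
Qed.

Lemma phi0 gx gy K : phi gx gy K 0 = 0.
Proof. unfold phi, Hf. rewrite RInt_point. change (K * 0 + 0 = 0). ring. Qed.

Lemma cd_der gx gy x : closed_unit_length_arclength_curve gx gy ->
  Derive (Derive gx) x = - curvature gx gy x * Derive gy x /\
  Derive (Derive gy) x = curvature gx gy x * Derive gx x.
Proof.
  intros H. pose proof H as [Hx [Hy [_ Hu]]].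
  assert (ex1 : forall y, ex_derive (Derive gx) y) by (apply smooth_exd, smooth_D; auto).
  assert (ex2 : forall y, ex_derive (Derive gy) y) by (apply smooth_exd, smooth_D; auto).
  assert (D1 : is_derive (fun y => Derive gx y ^ 2 + Derive gy y ^ 2) x
     (2 * Derive gx x * Derive (Derive gx) x + 2 * Derive gy x * Derive (Derive gy) x)).
  { auto_derive. split; auto. change (Derive (fun x0 => Derive gx x0) x) with (Derive (Derive gx) x). change (Derive (fun x0 => Derive gy x0) x) with (Derive (Derive gy) x). ring. }
  assert (D2 : is_derive (fun y => Derive gx y ^ 2 + Derive gy y ^ 2) x 0).
  { apply (is_derive_ext (fun _ => 1)). intros; rewrite Hu; reflexivity. apply (is_derive_const (K:=R_AbsRing) 1). }
  pose proof (is_derive_unique _ _ _ D1) as U1. rewrite (is_derive_unique _ _ _ D2) in U1.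
  assert (Kd : curvature gx gy x = Derive gx x * Derive (Derive gy) x - Derive gy x * Derive (Derive gx) x) by reflexivity.
  pose proof (Hu x) as Ux.
  set (c := Derive gx x) in *. set (d := Derive gy x) in *.
  set (c' := Derive (Derive gx) x) in *. set (d' := Derive (Derive gy) x) in *.
  rewrite Kd. split.
  - assert (E : c' - (- (c * d' - d * c') * d) = c * (2 * c * c' + 2 * d * d') / 2 + c' * (1 - (c ^ 2 + d ^ 2))) by (field).
    rewrite <- U1, Ux in E. lra.
  - assert (E : d' - ((c * d' - d * c') * c) = d * (2 * c * c' + 2 * d * d') / 2 + d' * (1 - (c ^ 2 + d ^ 2))) by (field).
    rewrite <- U1, Ux in E. lra.
Qed.

Lemma const_of_der0 (A : R -> R) s : (forall x, is_derive A x 0) -> A s = A 0.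
Proof.
  intros D. pose proof (ftc A (fun _ => 0) 0 s D (fun x => cont_const 0 x)) as E.
  rewrite RInt_constR in E. lra.
Qed.

Lemma closing gx gy K : closed_unit_length_arclength_curve gx gy ->
  RInt (fun s => cos (phi gx gy K s)) 0 1 = 0 /\ RInt (fun s => sin (phi gx gy K s)) 0 1 = 0.
Proof.
  intros H. pose proof H as [Hx [Hy [Hp Hu]]].
  set (ph := phi gx gy K).
  assert (exph : forall y, ex_derive ph y) by (intros; eexists; apply phi_der; auto).
  assert (ex0 : forall y, ex_derive gx y) by (apply smooth_exd; auto).
  assert (ex0' : forall y, ex_derive gy y) by (apply smooth_exd; auto).
  assert (ex1 : forall y, ex_derive (Derive gx) y) by (apply smooth_exd, smooth_D; auto).
  assert (ex2 : forall y, ex_derive (Derive gy) y) by (apply smooth_exd, smooth_D; auto).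
  set (A := fun s => Derive gx s * cos (ph s) + Derive gy s * sin (ph s)).
  set (B := fun s => - Derive gx s * sin (ph s) + Derive gy s * cos (ph s)).
  assert (DA : forall x, is_derive A x 0).
  { intros x. unfold A. destruct (cd_der gx gy x H) as [E1 E2].
    auto_derive. repeat split; auto.
    change (Derive (fun x0 => Derive gx x0) x) with (Derive (Derive gx) x).
    change (Derive (fun x0 => Derive gy x0) x) with (Derive (Derive gy) x).
    rewrite E1, E2, (Dfun ph x (curvature gx gy x) (phi_der gx gy K x H)). ring. }
  assert (DB : forall x, is_derive B x 0).
  { intros x. unfold B. destruct (cd_der gx gy x H) as [E1 E2].
    auto_derive. repeat split; auto.
    change (Derive (fun x0 => Derive gx x0) x) with (Derive (Derive gx) x).
    change (Derive (fun x0 => Derive gy x0) x) with (Derive (Derive gy) x).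
    rewrite E1, E2, (Dfun ph x (curvature gx gy x) (phi_der gx gy K x H)). ring. }
  set (A0 := A 0). set (B0 := B 0).
  assert (AB : A0 ^ 2 + B0 ^ 2 = 1).
  { unfold A0, B0, A, B, ph. rewrite phi0, cos_0, sin_0. pose proof (Hu 0) as U.
    set (p := Derive gx 0) in *. set (q := Derive gy 0) in *. clearbody p q. clear - U.
    transitivity (p ^ 2 + q ^ 2); [ring | exact U]. }
  assert (Ec : forall s, Derive gx s = A0 * cos (ph s) - B0 * sin (ph s)).
  { intros s. unfold A0, B0. rewrite <- (const_of_der0 A s DA), <- (const_of_der0 B s DB).
    unfold A, B. pose proof (sin2_cos2 (ph s)) as T. unfold Rsqr in T.
    replace (Derive gx s) with (Derive gx s * (sin (ph s) * sin (ph s) + cos (ph s) * cos (ph s))) at 1 by (rewrite T; ring).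
    ring. }
  assert (Ed : forall s, Derive gy s = A0 * sin (ph s) + B0 * cos (ph s)).
  { intros s. unfold A0, B0. rewrite <- (const_of_der0 A s DA), <- (const_of_der0 B s DB).
    unfold A, B. pose proof (sin2_cos2 (ph s)) as T. unfold Rsqr in T.
    replace (Derive gy s) with (Derive gy s * (sin (ph s) * sin (ph s) + cos (ph s) * cos (ph s))) at 1 by (rewrite T; ring).
    ring. }
  assert (cph : forall x, continuous ph x) by (intros; apply cont_of_der; auto).
  assert (I1 : RInt (Derive gx) 0 1 = 0).
  { rewrite RInt_Derive. destruct (Hp 0) as [P _]. rewrite Rplus_0_l in P. rewrite P. fixeq; ring.
    intros; auto. intros; apply cont_of_der; auto. }
  assert (I2 : RInt (Derive gy) 0 1 = 0).
  { rewrite RInt_Derive. destruct (Hp 0) as [_ P]. rewrite Rplus_0_l in P. rewrite P. fixeq; ring.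
    intros; auto. intros; apply cont_of_der; auto. }
  assert (exc : ex_RInt (fun s => cos (ph s)) 0 1) by (apply exRI; intros; cont).
  assert (exs : ex_RInt (fun s => sin (ph s)) 0 1) by (apply exRI; intros; cont).
  rewrite (RInt_ext _ (fun s => A0 * cos (ph s) - B0 * sin (ph s))) in I1 by (intros; apply Ec).
  rewrite (RInt_ext _ (fun s => A0 * sin (ph s) + B0 * cos (ph s))) in I2 by (intros; apply Ed).
  rewrite RInt_minusR, !RInt_scalR in I1; try apply exRI; intros; cont.
  rewrite RInt_plusR, !RInt_scalR in I2; try apply exRI; intros; cont.
  set (X := RInt (fun s => cos (ph s)) 0 1) in *. set (Y := RInt (fun s => sin (ph s)) 0 1) in *.
  assert (EX : X = A0 * (A0 * X - B0 * Y) + B0 * (A0 * Y + B0 * X)).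
  { replace X with (X * (A0 ^ 2 + B0 ^ 2)) at 1 by (rewrite AB; ring). fixeq; ring. }
  assert (EY : Y = A0 * (A0 * Y + B0 * X) - B0 * (A0 * X - B0 * Y)).
  { replace Y with (Y * (A0 ^ 2 + B0 ^ 2)) at 1 by (rewrite AB; ring). fixeq; ring. }
  change (RInt (fun s : R => A0 * cos (ph s)) 0 1) with (RInt (fun s : R => A0 * cos (ph s)) 0 1) in I1.
  split.
  - rewrite EX. fixeq. rewrite I1, I2. ring.
  - rewrite EY. fixeq. rewrite I1, I2. ring.
Qed.

Ltac derv := intros; auto_derive; repeat split; auto; try (fixeq; field; auto; fail).

Lemma ftc' (F f : R -> R) a b : (forall x, is_derive F x (f x)) -> (forall x, continuous f x) ->
  RInt f a b = F b - F a.
Proof. apply ftc. Qed.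

Lemma T1 x : 0 <= x -> sin x <= x.
Proof.
  intros Hx.
  assert (E : RInt (fun t => 1 - cos t) 0 x = (x - sin x) - (0 - sin 0)).
  { apply (ftc (fun t => t - sin t)). derv. intros; cont. }
  assert (0 <= RInt (fun t => 1 - cos t) 0 x).
  { apply RInt_ge0_c; auto. intros; cont. intros t _. pose proof (COS_bound t); lra. }
  rewrite sin_0 in E. lra.
Qed.

Lemma T2 x : 0 <= x -> 1 - cos x <= x ^ 2 / 2.
Proof.
  intros Hx.
  assert (E1 : RInt (fun t => sin t) 0 x = (- cos x) - (- cos 0)).
  { apply (ftc (fun t => - cos t)). derv. intros; cont. }
  assert (E2 : RInt (fun t => t) 0 x = x ^ 2 / 2 - 0 ^ 2 / 2).
  { apply (ftc (fun t => t ^ 2 / 2)). derv. intros; cont. }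
  assert (RInt (fun t => sin t) 0 x <= RInt (fun t => t) 0 x).
  { apply RInt_le_c; auto; intros; cont. apply T1; lra. }
  rewrite cos_0 in E1. lra.
Qed.

Lemma T3 x : 0 <= x -> x - sin x <= x ^ 2 / 2.
Proof.
  intros Hx.
  assert (E : RInt (fun t => 1 - cos t) 0 x = (x - sin x) - (0 - sin 0)).
  { apply (ftc (fun t => t - sin t)). derv. intros; cont. }
  assert (E2 : RInt (fun t => t) 0 x = x ^ 2 / 2 - 0 ^ 2 / 2).
  { apply (ftc (fun t => t ^ 2 / 2)). derv. intros; cont. }
  assert (RInt (fun t => 1 - cos t) 0 x <= RInt (fun t => t) 0 x).
  { apply RInt_le_c; auto; intros; cont.
    destruct (Rle_lt_dec x0 2).
    - pose proof (T2 x0 ltac:(lra)). nra.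
    - pose proof (COS_bound x0). lra. }
  rewrite sin_0 in E. lra.
Qed.

Lemma bcos x : Rabs (cos x - 1) <= x ^ 2 / 2.
Proof.
  pose proof (COS_bound x). rewrite Rabs_left1 by lra.
  destruct (Rle_lt_dec 0 x).
  - pose proof (T2 x r). lra.
  - pose proof (T2 (- x) ltac:(lra)). rewrite cos_neg in H0. nra.
Qed.

Lemma bsin x : Rabs (sin x - x) <= x ^ 2 / 2.
Proof.
  destruct (Rle_lt_dec 0 x).
  - pose proof (T1 x r). pose proof (T3 x r). rewrite Rabs_left1 by lra. lra.
  - pose proof (T1 (-x) ltac:(lra)). pose proof (T3 (-x) ltac:(lra)). rewrite sin_neg in *.
    rewrite Rabs_right by lra. nra.
Qed.


Lemma S1 K : K <> 0 -> sin K = 0 -> RInt (fun s => cos (K * s)) 0 1 = 0.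
Proof.
  intros HK H0. rewrite (ftc (fun s => sin (K * s) / K)).
  rewrite Rmult_1_r, Rmult_0_r, H0, sin_0. fixeq; field; auto.
  derv. intros; cont.
Qed.

Lemma S2 K : K <> 0 -> cos K = 1 -> RInt (fun s => sin (K * s)) 0 1 = 0.
Proof.
  intros HK H0. rewrite (ftc (fun s => - cos (K * s) / K)).
  rewrite Rmult_1_r, Rmult_0_r, H0, cos_0. fixeq; field; auto.
  derv. intros; cont.
Qed.

Lemma S3 K : K <> 0 -> sin K = 0 -> RInt (fun s => cos (K * s) ^ 2) 0 1 = 1 / 2.
Proof.
  intros HK H0. rewrite (ftc (fun s => s / 2 + sin (K * s) * cos (K * s) / (2 * K))).
  rewrite Rmult_1_r, Rmult_0_r, H0, sin_0. fixeq; field; auto.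
  intros; auto_derive; auto. pose proof (sin2_cos2 (K * x)) as T. unfold Rsqr in T.
  fixeq. field_simplify; auto. replace (cos (K * x) ^ 2) with (1 - sin (K * x) ^ 2) by (rewrite <- T; ring).
  field; auto. intros; cont.
Qed.

Lemma S4 K : K <> 0 -> sin K = 0 -> RInt (fun s => sin (K * s) ^ 2) 0 1 = 1 / 2.
Proof.
  intros HK H0. rewrite (ftc (fun s => s / 2 - sin (K * s) * cos (K * s) / (2 * K))).
  rewrite Rmult_1_r, Rmult_0_r, H0, sin_0. fixeq; field; auto.
  intros; auto_derive; auto. pose proof (sin2_cos2 (K * x)) as T. unfold Rsqr in T.
  fixeq. field_simplify; auto. replace (cos (K * x) ^ 2) with (1 - sin (K * x) ^ 2) by (rewrite <- T; ring).
  field; auto. intros; cont.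
Qed.

Lemma S5 K : K <> 0 -> sin K = 0 -> RInt (fun s => sin (K * s) * cos (K * s)) 0 1 = 0.
Proof.
  intros HK H0. rewrite (ftc (fun s => sin (K * s) ^ 2 / (2 * K))).
  rewrite Rmult_1_r, Rmult_0_r, H0, sin_0. fixeq; field; auto.
  derv. intros; cont.
Qed.

Lemma bp_cos (g dg : R -> R) K : K <> 0 -> sin K = 0 -> cos K = 1 ->
  (forall x, is_derive g x (dg x)) -> (forall x, continuous dg x) -> g 1 = g 0 ->
  RInt (fun s => dg s * cos (K * s)) 0 1 = K * RInt (fun s => g s * sin (K * s)) 0 1.
Proof.
  intros HK Sk C D cd E.
  assert (cg : forall x, continuous g x) by (intros; apply cont_of_der; eexists; eauto).
  rewrite (byparts g dg (fun s => cos (K * s)) (fun s => - K * sin (K * s))); auto.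
  rewrite (RInt_ext (fun x => g x * (- K * sin (K * x))) (fun x => (- K) * (g x * sin (K * x)))) by (intros; fixeq; ring).
  rewrite RInt_scalR. rewrite Rmult_1_r, Rmult_0_r, C, cos_0, E. fixeq; ring.
  apply exRI; intros; cont.
  derv. intros; cont.
Qed.

Lemma bp_sin (g dg : R -> R) K : K <> 0 -> sin K = 0 -> cos K = 1 ->
  (forall x, is_derive g x (dg x)) -> (forall x, continuous dg x) -> g 1 = g 0 ->
  RInt (fun s => dg s * sin (K * s)) 0 1 = - K * RInt (fun s => g s * cos (K * s)) 0 1.
Proof.
  intros HK Sk C D cd E.
  assert (cg : forall x, continuous g x) by (intros; apply cont_of_der; eexists; eauto).
  rewrite (byparts g dg (fun s => sin (K * s)) (fun s => K * cos (K * s))); auto.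
  rewrite (RInt_ext (fun x => g x * (K * cos (K * x))) (fun x => K * (g x * cos (K * x)))) by (intros; fixeq; ring).
  rewrite RInt_scalR. rewrite Rmult_1_r, Rmult_0_r, Sk, sin_0. fixeq; ring.
  apply exRI; intros; cont.
  derv. intros; cont.
Qed.

Lemma kd_iter gx gy K : closed_unit_length_arclength_curve gx gy -> K <> 0 -> sin K = 0 -> cos K = 1 ->
  forall i, RInt (fun s => kd gx gy (2 * i) s * cos (K * s)) 0 1 = (- K ^ 2) ^ i * RInt (fun s => kd gx gy 0 s * cos (K * s)) 0 1
         /\ RInt (fun s => kd gx gy (2 * i) s * sin (K * s)) 0 1 = (- K ^ 2) ^ i * RInt (fun s => kd gx gy 0 s * sin (K * s)) 0 1.
Proof.
  intros H HK Sk C. induction i as [|i [IH1 IH2]].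
  - change (2 * 0)%nat with 0%nat. rewrite pow_O. split; rring.
  - replace (2 * S i)%nat with (S (S (2 * i)%nat)) by lia.
    set (j := (2 * i)%nat) in *.
    rewrite <- tech_pow_Rmult. split.
    + rewrite (bp_cos (kd gx gy (S j))); auto; try (intros; apply kd_isd; auto); try (intros; apply kd_cont; auto); try (apply kd_ends; auto).
      rewrite (bp_sin (kd gx gy j)); auto; try (intros; apply kd_isd; auto); try (intros; apply kd_cont; auto); try (apply kd_ends; auto).
      rewrite IH1. rring.
    + rewrite (bp_sin (kd gx gy (S j))); auto; try (intros; apply kd_isd; auto); try (intros; apply kd_cont; auto); try (apply kd_ends; auto).
      rewrite (bp_cos (kd gx gy j)); auto; try (intros; apply kd_isd; auto); try (intros; apply kd_cont; auto); try (apply kd_ends; auto).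
      rewrite IH2. rring.
Qed.

Lemma abs_RInt01 (f g : R -> R) : (forall x, continuous f x) -> (forall x, continuous g x) ->
  (forall x, 0 <= x <= 1 -> Rabs (f x) <= g x) -> Rabs (RInt f 0 1) <= RInt g 0 1.
Proof.
  intros cf cg B. eapply Rle_trans. apply abs_RInt_le; try lra. apply exRI; auto.
  apply RInt_le_c; try lra; auto. intros; cont. 
Qed.

Lemma Hf_ends gx gy K : closed_unit_length_arclength_curve gx gy -> RInt (curvature gx gy) 0 1 = K ->
  Hf gx gy K 1 = 0 /\ Hf gx gy K 0 = 0.
Proof.
  intros H HK. unfold Hf. split. apply hd_mean; auto. rewrite RInt_point. reflexivity.
Qed.

Lemma rem_bound (H a b : R) : Rabs a <= 1 -> Rabs b <= 1 ->
  Rabs (a * (cos H - 1) + b * (sin H - H)) <= H ^ 2.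
Proof.
  intros Ha Hb. eapply Rle_trans. apply Rabs_triang. rewrite !Rabs_mult.
  pose proof (bcos H). pose proof (bsin H).
  pose proof (Rabs_pos (cos H - 1)). pose proof (Rabs_pos (sin H - H)).
  assert (Rabs a * Rabs (cos H - 1) <= Rabs (cos H - 1)).
  { rewrite <- (Rmult_1_l (Rabs (cos H - 1))) at 2. apply Rmult_le_compat_r; auto. }
  assert (Rabs b * Rabs (sin H - H) <= Rabs (sin H - H)).
  { rewrite <- (Rmult_1_l (Rabs (sin H - H))) at 2. apply Rmult_le_compat_r; auto. }
  lra.
Qed.

Lemma abs_cos_le1 x : Rabs (cos x) <= 1.
Proof. apply Rabs_le. pose proof (COS_bound x). lra. Qed.
Lemma abs_sin_le1 x : Rabs (sin x) <= 1.
Proof. apply Rabs_le. pose proof (SIN_bound x). lra. Qed.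

Lemma HfInt gx gy K m : closed_unit_length_arclength_curve gx gy -> RInt (curvature gx gy) 0 1 = K ->
  (1 <= m)%nat -> RInt (fun s => Hf gx gy K s ^ 2) 0 1 <= 2 * Energy m gx gy.
Proof.
  intros H HK Hm.
  apply Rle_trans with (RInt (fun _ => 2 * Energy m gx gy) 0 1).
  apply RInt_le_c; try lra. intros; cont. apply Hf_cont; auto. intros; cont.
  intros x Hx. apply (Hbound gx gy K m H HK Hm x Hx).
  rewrite RInt_constR. lra.
Qed.

Lemma closing_est gx gy K m : closed_unit_length_arclength_curve gx gy -> RInt (curvature gx gy) 0 1 = K ->
  K <> 0 -> sin K = 0 -> cos K = 1 -> (1 <= m)%nat ->
  Rabs (RInt (fun s => Hf gx gy K s * sin (K * s)) 0 1) <= 2 * Energy m gx gy /\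
  Rabs (RInt (fun s => Hf gx gy K s * cos (K * s)) 0 1) <= 2 * Energy m gx gy.
Proof.
  intros H HK HK0 Sk Ck Hm.
  destruct (closing gx gy K H) as [C1 C2].
  assert (cH : forall x, continuous (Hf gx gy K) x) by (intros; apply Hf_cont; auto).
  set (h := Hf gx gy K) in *.
  assert (HI := HfInt gx gy K m H HK Hm). fold h in HI.
  split.
  - assert (E : RInt (fun s => h s * sin (K * s)) 0 1 =
       RInt (fun s => cos (K * s) * (cos (h s) - 1) + (- sin (K * s)) * (sin (h s) - h s)) 0 1).
    { assert (E1 : RInt (fun s => cos (phi gx gy K s)) 0 1 =
          RInt (fun s => cos (K * s)) 0 1 - RInt (fun s => h s * sin (K * s)) 0 1
          + RInt (fun s => cos (K * s) * (cos (h s) - 1) + (- sin (K * s)) * (sin (h s) - h s)) 0 1).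
      { rewrite <- RInt_minusR, <- RInt_plusR. apply RInt_ext. intros x _. unfold phi. fold h.
        rewrite cos_plus. fixeq; ring.
        all: apply exRI; intros; cont. }
      rewrite C1, S1 in E1; auto. lra. }
    rewrite E. eapply Rle_trans. apply (abs_RInt01 _ (fun s => h s ^ 2)). intros; cont. intros; cont.
    intros x _. apply rem_bound. apply abs_cos_le1. rewrite Rabs_Ropp. apply abs_sin_le1.
    exact HI.
  - assert (E : RInt (fun s => h s * cos (K * s)) 0 1 =
       - RInt (fun s => sin (K * s) * (cos (h s) - 1) + cos (K * s) * (sin (h s) - h s)) 0 1).
    { assert (E1 : RInt (fun s => sin (phi gx gy K s)) 0 1 =
          RInt (fun s => sin (K * s)) 0 1 + RInt (fun s => h s * cos (K * s)) 0 1
          + RInt (fun s => sin (K * s) * (cos (h s) - 1) + cos (K * s) * (sin (h s) - h s)) 0 1).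
      { rewrite <- RInt_plusR, <- RInt_plusR. apply RInt_ext. intros x _. unfold phi. fold h.
        rewrite sin_plus. fixeq; ring.
        all: apply exRI; intros; cont. }
      rewrite C2, S2 in E1; auto. lra. }
    rewrite E, Rabs_Ropp. eapply Rle_trans. apply (abs_RInt01 _ (fun s => h s ^ 2)). intros; cont. intros; cont.
    intros x _. apply rem_bound. apply abs_sin_le1. apply abs_cos_le1.
    exact HI.
Qed.

Lemma kd0_hd_cos gx gy K : closed_unit_length_arclength_curve gx gy -> RInt (curvature gx gy) 0 1 = K ->
  K <> 0 -> sin K = 0 -> cos K = 1 ->
  RInt (fun s => kd gx gy 0 s * cos (K * s)) 0 1 = K * RInt (fun s => Hf gx gy K s * sin (K * s)) 0 1 /\
  RInt (fun s => kd gx gy 0 s * sin (K * s)) 0 1 = - K * RInt (fun s => Hf gx gy K s * cos (K * s)) 0 1.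
Proof.
  intros H HK HK0 Sk Ck. destruct (Hf_ends gx gy K H HK) as [E1 E0].
  split.
  - rewrite (RInt_ext _ (fun s => hd gx gy K 0 s * cos (K * s) + K * cos (K * s))) by (intros; unfold hd; fixeq; ring).
    rewrite RInt_plusR, RInt_scalR, S1; auto.
    rewrite (bp_cos (Hf gx gy K) (hd gx gy K 0)); auto. rring.
    intros; apply Hf_der; auto. intros; apply hd_cont; auto. rewrite E1, E0; auto.
    apply exRI; intros; cont. apply exRI; intros; cont. apply hd_cont; auto. apply exRI; intros; cont.
  - rewrite (RInt_ext _ (fun s => hd gx gy K 0 s * sin (K * s) + K * sin (K * s))) by (intros; unfold hd; fixeq; ring).
    rewrite RInt_plusR, RInt_scalR, S2; auto.
    rewrite (bp_sin (Hf gx gy K) (hd gx gy K 0)); auto. rring.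
    intros; apply Hf_der; auto. intros; apply hd_cont; auto. rewrite E1, E0; auto.
    apply exRI; intros; cont. apply exRI; intros; cont. apply hd_cont; auto. apply exRI; intros; cont.
Qed.

Lemma sq_bound (A K Y E : R) (m : nat) : A = (- K ^ 2) ^ m * K * Y -> Rabs Y <= E ->
  A ^ 2 <= (K ^ 4) ^ m * K ^ 2 * E ^ 2.
Proof.
  intros EA HY. rewrite EA.
  assert (P : ((- K ^ 2) ^ m) ^ 2 = (K ^ 4) ^ m).
  { rewrite <- pow_mult, Nat.mul_comm, pow_mult. f_equal. ring. }
  replace (((- K ^ 2) ^ m * K * Y) ^ 2) with (((- K ^ 2) ^ m) ^ 2 * K ^ 2 * Y ^ 2) by ring.
  rewrite P. apply Rmult_le_compat_l.
  apply Rmult_le_pos. apply pow_le. nra. nra.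
  apply pow_maj_Rabs. exact HY.
Qed.

Lemma Xbound gx gy K m : closed_unit_length_arclength_curve gx gy -> RInt (curvature gx gy) 0 1 = K ->
  K <> 0 -> sin K = 0 -> cos K = 1 -> (1 <= m)%nat ->
  (RInt (fun s => kd gx gy (2 * m) s * cos (K * s)) 0 1) ^ 2 <= (K ^ 4) ^ m * K ^ 2 * (2 * Energy m gx gy) ^ 2 /\
  (RInt (fun s => kd gx gy (2 * m) s * sin (K * s)) 0 1) ^ 2 <= (K ^ 4) ^ m * K ^ 2 * (2 * Energy m gx gy) ^ 2.
Proof.
  intros H HK HK0 Sk Ck Hm.
  destruct (kd_iter gx gy K H HK0 Sk Ck m) as [I1 I2].
  destruct (kd0_hd_cos gx gy K H HK HK0 Sk Ck) as [J1 J2].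
  destruct (closing_est gx gy K m H HK HK0 Sk Ck Hm) as [B1 B2].
  split.
  - apply (sq_bound _ _ (RInt (fun s => Hf gx gy K s * sin (K * s)) 0 1)); auto.
    rewrite I1, J1. rring.
  - apply (sq_bound _ _ (- RInt (fun s => Hf gx gy K s * cos (K * s)) 0 1)); auto.
    rewrite I2, J2. rring. rewrite Rabs_Ropp; auto.
Qed.

Lemma FTC_der (g : R -> R) x : (forall y, continuous g y) -> is_derive (fun s => RInt g 0 s) x (g x).
Proof.
  intros cg. apply (is_derive_RInt (V:=R_NormedModule) _ _ 0).
  apply filter_forall. intros b. apply (RInt_correct (V:=R_CompleteNormedModule)). apply exRI; auto.
  auto.
Qed.

Lemma Dfun' (f : R -> R) x l : is_derive f x l -> Derive (fun y => f y) x = l.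
Proof. intros H. exact (is_derive_unique f x l H). Qed.

Lemma eq_mod (A B c t : R) : t = 1 -> A - B = c * (t - 1) -> A = B.
Proof. intros -> E. rewrite Rminus_diag, Rmult_0_r in E. lra. Qed.

Lemma eq_of_sub (a b c d : R) : a - b - c - d = 0 -> a = b + c + d.
Proof. intros; lra. Qed.

Lemma ode_rep (u u1 u2 : R -> R) K : K <> 0 ->
  (forall x, is_derive u x (u1 x)) -> (forall x, is_derive u1 x (u2 x)) -> (forall x, continuous u2 x) ->
  forall s, u s = (sin (K * s) * RInt (fun t => cos (K * t) * (u2 t + K ^ 2 * u t)) 0 s
                   - cos (K * s) * RInt (fun t => sin (K * t) * (u2 t + K ^ 2 * u t)) 0 s) / K
                  + u 0 * cos (K * s) + (u1 0 / K) * sin (K * s).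
Proof.
  intros HK D1 D2 c2.
  assert (c1 : forall x, continuous u1 x) by (intros; apply cont_of_der; eexists; eauto).
  assert (c0 : forall x, continuous u x) by (intros; apply cont_of_der; eexists; eauto).
  set (f := fun t => u2 t + K ^ 2 * u t).
  assert (cf : forall x, continuous f x) by (intros; unfold f; cont).
  set (P := fun s => RInt (fun t => cos (K * t) * f t) 0 s).
  set (Q := fun s => RInt (fun t => sin (K * t) * f t) 0 s).
  assert (DP : forall x, is_derive P x (cos (K * x) * f x)) by (intros; unfold P; apply (FTC_der (fun t => cos (K * t) * f t)); intros; cont).
  assert (DQ : forall x, is_derive Q x (sin (K * x) * f x)) by (intros; unfold Q; apply (FTC_der (fun t => sin (K * t) * f t)); intros; cont).
  assert (eP : forall x, ex_derive P x) by (intros; eexists; eauto).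
  assert (eQ : forall x, ex_derive Q x) by (intros; eexists; eauto).
  assert (eu : forall x, ex_derive u x) by (intros; eexists; eauto).
  assert (eu1 : forall x, ex_derive u1 x) by (intros; eexists; eauto).
  set (a := u 0). set (b := u1 0 / K).
  set (z := fun s => u s - (sin (K * s) * P s - cos (K * s) * Q s) / K - a * cos (K * s) - b * sin (K * s)).
  set (z1 := fun s => u1 s - (cos (K * s) * P s + sin (K * s) * Q s) + a * K * sin (K * s) - b * K * cos (K * s)).
  assert (Dz : forall x, is_derive z x (z1 x)).
  { intros x. unfold z. auto_derive. repeat split; auto.
    rewrite (Dfun' P x _ (DP x)), (Dfun' Q x _ (DQ x)), (Dfun' u x _ (D1 x)). unfold z1. field; auto. }
  set (z2 := fun s => - K ^ 2 * z s).
  assert (Dz1 : forall x, is_derive z1 x (z2 x)).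
  { intros x. unfold z1. auto_derive. repeat split; auto.
    rewrite (Dfun' P x _ (DP x)), (Dfun' Q x _ (DQ x)), (Dfun' u1 x _ (D2 x)). unfold z2, z, f.
    pose proof (sin2_cos2 (K * x)) as T. unfold Rsqr in T.
    apply (eq_mod _ _ (- (u2 x + K ^ 2 * u x)) _ T). field; auto. }
  set (W := fun s => z1 s ^ 2 + K ^ 2 * z s ^ 2).
  assert (DW : forall x, is_derive W x 0).
  { intros x. unfold W. assert (ez : ex_derive z x) by (eexists; eauto).
    assert (ez1 : ex_derive z1 x) by (eexists; eauto).
    auto_derive. repeat split; auto.
    rewrite (Dfun' z x _ (Dz x)), (Dfun' z1 x _ (Dz1 x)). unfold z2. ring. }
  assert (W0 : W 0 = 0).
  { unfold W, z1, z, P, Q, a, b. rewrite !Rmult_0_r, cos_0, sin_0, !RInt_point.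
    change (zero : R) with 0. field; auto. }
  intros s. pose proof (const_of_der0 W s DW) as Ws. rewrite W0 in Ws.
  unfold W in Ws. assert (Z : z s = 0).
  { pose proof (Rsqr_pos_lt K HK) as KK. unfold Rsqr in KK.
    assert (0 <= z1 s ^ 2) by apply pow2_ge_0.
    assert (0 <= K ^ 2 * z s ^ 2) by (apply Rmult_le_pos; apply pow2_ge_0).
    assert (E2 : K ^ 2 * z s ^ 2 = 0) by lra.
    apply Rmult_integral in E2. destruct E2 as [E2|E2].
    - exfalso. simpl in E2. lra.
    - destruct (Req_dec (z s) 0) as [|NZ]; auto. exfalso. apply (pow_nonzero _ 2 NZ E2). }
  unfold z, a, b, P, Q in Z. unfold a, b. unfold f in *. apply eq_of_sub. exact Z.
Qed.

Lemma sc_ineq (s c P Q : R) : s ^ 2 + c ^ 2 = 1 -> (s * P - c * Q) ^ 2 <= P ^ 2 + Q ^ 2.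
Proof.
  intros T. assert (E : (s * P - c * Q) ^ 2 + (c * P + s * Q) ^ 2 = (s ^ 2 + c ^ 2) * (P ^ 2 + Q ^ 2)) by ring.
  rewrite T in E. assert (0 <= (c * P + s * Q) ^ 2) by apply pow2_ge_0. lra.
Qed.

Lemma sc1 x : sin x ^ 2 + cos x ^ 2 = 1.
Proof. pose proof (sin2_cos2 x). unfold Rsqr in H. lra. Qed.

Lemma Pbound (g f : R -> R) s : 0 <= s <= 1 -> (forall x, continuous f x) -> (forall x, continuous g x) ->
  (forall x, Rabs (g x) <= 1) ->
  (RInt (fun t => g t * f t) 0 s) ^ 2 <= RInt (fun t => f t ^ 2) 0 1.
Proof.
  intros Hs cf cg Hg.
  eapply Rle_trans. apply CS; auto. intros; cont.
  eapply Rle_trans. apply RInt_sub01; try lra. intros; cont. intros; apply pow2_ge_0.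
  apply RInt_le_c; try lra. intros; cont. intros; cont.
  intros x _. rewrite Rpow_mult_distr.
  assert (g x ^ 2 <= 1). { rewrite <- (pow2_abs (g x)). pose proof (Rabs_pos (g x)). specialize (Hg x). nra. }
  pose proof (pow2_ge_0 (f x)). nra.
Qed.

Lemma ode_est (u u1 u2 : R -> R) K : K <> 0 -> sin K = 0 -> cos K = 1 ->
  (forall x, is_derive u x (u1 x)) -> (forall x, is_derive u1 x (u2 x)) -> (forall x, continuous u2 x) ->
  RInt (fun s => u s ^ 2) 0 1 <=
    68 / K ^ 2 * RInt (fun s => (u2 s + K ^ 2 * u s) ^ 2) 0 1
    + 16 * ((RInt (fun s => u s * cos (K * s)) 0 1) ^ 2 + (RInt (fun s => u s * sin (K * s)) 0 1) ^ 2).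
Proof.
  intros HK Sk Ck D1 D2 c2.
  assert (c1 : forall x, continuous u1 x) by (intros; apply cont_of_der; eexists; eauto).
  assert (c0 : forall x, continuous u x) by (intros; apply cont_of_der; eexists; eauto).
  pose proof (ode_rep u u1 u2 K HK D1 D2 c2) as REP.
  set (f := fun t => u2 t + K ^ 2 * u t) in *.
  assert (cf : forall x, continuous f x) by (intros; unfold f; cont).
  set (P := fun s => RInt (fun t => cos (K * t) * f t) 0 s).
  set (Q := fun s => RInt (fun t => sin (K * t) * f t) 0 s).
  assert (cP : forall x, continuous P x).
  { intros; apply cont_of_der; eexists; unfold P; apply (FTC_der (fun t => cos (K * t) * f t)); intros; cont. }
  assert (cQ : forall x, continuous Q x).
  { intros; apply cont_of_der; eexists; unfold Q; apply (FTC_der (fun t => sin (K * t) * f t)); intros; cont. }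
  set (v := fun s => (sin (K * s) * P s - cos (K * s) * Q s) / K).
  assert (cv : forall x, continuous v x).
  { intros; unfold v. apply (cont_mult _ (fun _ => / K)). cont. cont. }
  remember (u 0) as a eqn:Ha. remember (u1 0 / K) as b eqn:Hb.
  assert (rep : forall s, u s = v s + a * cos (K * s) + b * sin (K * s)) by (intros; apply REP).
  clear REP. set (Phi := RInt (fun s => f s ^ 2) 0 1).
  pose proof (Rsqr_pos_lt K HK) as KK. unfold Rsqr in KK.
  assert (vb : forall s, 0 <= s <= 1 -> v s ^ 2 <= 2 * Phi / K ^ 2).
  { intros s Hs. unfold v.
    assert (BP : P s ^ 2 <= Phi) by (apply (Pbound (fun t => cos (K * t)) f); auto; intros; cont; apply abs_cos_le1).
    assert (BQ : Q s ^ 2 <= Phi) by (apply (Pbound (fun t => sin (K * t)) f); auto; intros; cont; apply abs_sin_le1).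
    pose proof (sc_ineq (sin (K * s)) (cos (K * s)) (P s) (Q s) (sc1 _)).
    replace (((sin (K * s) * P s - cos (K * s) * Q s) / K) ^ 2) with ((sin (K * s) * P s - cos (K * s) * Q s) ^ 2 / K ^ 2) by (field; auto).
    unfold Rdiv. apply Rmult_le_compat_r. apply Rlt_le, Rinv_0_lt_compat. simpl; lra. lra. }
  assert (Vcb : forall (g : R -> R), (forall x, continuous g x) -> (forall x, Rabs (g x) <= 1) ->
     (RInt (fun s => v s * g s) 0 1) ^ 2 <= 2 * Phi / K ^ 2).
  { intros g cg Hg. eapply Rle_trans. apply CS; try lra. intros; cont.
    apply Rle_trans with (RInt (fun _ => 2 * Phi / K ^ 2) 0 1).
    apply RInt_le_c; try lra. intros; cont. intros; cont.
    intros x Hx. rewrite Rpow_mult_distr.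
    assert (g x ^ 2 <= 1). { rewrite <- (pow2_abs (g x)). pose proof (Rabs_pos (g x)). specialize (Hg x). nra. }
    specialize (vb x Hx). pose proof (pow2_ge_0 (v x)). pose proof (pow2_ge_0 (g x)). nra.
    rewrite RInt_constR. lra. }
  set (Vc := RInt (fun s => v s * cos (K * s)) 0 1).
  set (Vs := RInt (fun s => v s * sin (K * s)) 0 1).
  assert (BVc : Vc ^ 2 <= 2 * Phi / K ^ 2) by (apply (Vcb (fun s => cos (K * s))); intros; [cont | apply abs_cos_le1]).
  assert (BVs : Vs ^ 2 <= 2 * Phi / K ^ 2) by (apply (Vcb (fun s => sin (K * s))); intros; [cont | apply abs_sin_le1]).
  assert (EXc : RInt (fun s => u s * cos (K * s)) 0 1 = Vc + a / 2).
  { rewrite (RInt_ext _ (fun s => (v s * cos (K * s) + a * (cos (K * s) ^ 2)) + b * (sin (K * s) * cos (K * s))))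
      by (intros; rewrite rep; fixeq; ring).
    rewrite RInt_plusR, RInt_plusR, RInt_scalR, RInt_scalR, S3, S5; auto. unfold Vc. fixeq. rint_atoms. lra.
    all: apply exRI; intros; cont. }
  assert (EXs : RInt (fun s => u s * sin (K * s)) 0 1 = Vs + b / 2).
  { rewrite (RInt_ext _ (fun s => (v s * sin (K * s) + a * (sin (K * s) * cos (K * s))) + b * (sin (K * s) ^ 2)))
      by (intros; rewrite rep; fixeq; ring).
    rewrite RInt_plusR, RInt_plusR, RInt_scalR, RInt_scalR, S4, S5; auto. unfold Vs. fixeq. rint_atoms. lra.
    all: apply exRI; intros; cont. }
  rewrite EXc, EXs.
  assert (U : RInt (fun s => u s ^ 2) 0 1 <= RInt (fun _ => 2 * (2 * Phi / K ^ 2) + 2 * (a ^ 2 + b ^ 2)) 0 1).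
  { apply RInt_le_c; try lra. intros; cont. intros; cont.
    intros x Hx. rewrite rep. specialize (vb x Hx).
    pose proof (sc_ineq (sin (K * x)) (cos (K * x)) (-b) a (sc1 _)) as W.
    replace ((sin (K * x) * - b - cos (K * x) * a) ^ 2) with ((a * cos (K * x) + b * sin (K * x)) ^ 2) in W by ring.
    replace (v x + a * cos (K * x) + b * sin (K * x)) with (v x + (a * cos (K * x) + b * sin (K * x))) by ring.
    remember (a * cos (K * x) + b * sin (K * x)) as w. remember (v x) as vv.
    assert ((vv + w) ^ 2 <= 2 * vv ^ 2 + 2 * w ^ 2) by (pose proof (pow2_ge_0 (vv - w)); nra).
    replace ((- b) ^ 2) with (b ^ 2) in W by ring. lra. }
  rewrite RInt_constR in U.
  assert (PhiK : 0 <= Phi / K ^ 2).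
  { unfold Rdiv. apply Rmult_le_pos. unfold Phi. apply RInt_ge0_c; try lra. intros; cont. intros; apply pow2_ge_0.
    apply Rlt_le, Rinv_0_lt_compat. simpl; lra. }
  assert (A2 : a ^ 2 <= 8 * (Vc + a / 2) ^ 2 + 8 * Vc ^ 2) by (pose proof (pow2_ge_0 (Vc + a/2 + Vc)); nra).
  assert (B2 : b ^ 2 <= 8 * (Vs + b / 2) ^ 2 + 8 * Vs ^ 2) by (pose proof (pow2_ge_0 (Vs + b/2 + Vs)); nra).
  unfold Phi, f in *. rint_atoms_all.
  match goal with |- _ <= 68 / K ^ 2 * ?Y + _ => replace (68 / K ^ 2 * Y) with (68 * (Y / K ^ 2)) by (field; simpl; lra) end.
  lra.
Qed.

Lemma m1sq n : ((-1) ^ n) ^ 2 = 1.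
Proof. rewrite <- pow_mult, Nat.mul_comm, pow_mult. replace ((-1) ^ 2) with 1 by ring. apply pow1. Qed.

Lemma Kfacts (omega : Z) : omega <> 0%Z ->
  2 * PI * IZR omega <> 0 /\ sin (2 * PI * IZR omega) = 0 /\ cos (2 * PI * IZR omega) = 1.
Proof.
  intros Hw. pose proof PI_RGT_0. pose proof (not_0_IZR _ Hw).
  assert (sx : sin (PI * IZR omega) = 0) by (apply sin_eq_0_1; exists omega; ring).
  split; [|split].
  - intro E. apply Rmult_integral in E. destruct E; [lra|auto].
  - apply sin_eq_0_1. exists (2 * omega)%Z. rewrite mult_IZR. simpl. ring.
  - replace (2 * PI * IZR omega) with (2 * (PI * IZR omega)) by ring.
    rewrite cos_2a_sin, sx. ring.
Qed.

Lemma main_bound gx gy K m : closed_unit_length_arclength_curve gx gy -> RInt (curvature gx gy) 0 1 = K ->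
  K <> 0 -> sin K = 0 -> cos K = 1 -> (1 <= m)%nat ->
  RInt (fun s => kd gx gy (S (S (2 * m))) s ^ 2) 0 1 <=
    (2 + 136 * K ^ 2) * RInt (fun s => (kd gx gy (S (S (2 * m))) s + K ^ 2 * kd gx gy (2 * m) s) ^ 2) 0 1
    + 256 * K ^ 6 * (K ^ 4) ^ m * Energy m gx gy ^ 2.
Proof.
  intros H HK HK0 Sk Ck Hm.
  set (u := kd gx gy (2 * m)). set (u2 := kd gx gy (S (S (2 * m)))).
  assert (cu : forall x, continuous u x) by (intros; apply kd_cont; auto).
  assert (cu2 : forall x, continuous u2 x) by (intros; apply kd_cont; auto).
  pose proof (ode_est u (kd gx gy (S (2 * m))) u2 K HK0 Sk Ck
     (fun x => kd_isd gx gy _ x H) (fun x => kd_isd gx gy _ x H) cu2) as O.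
  destruct (Xbound gx gy K m H HK HK0 Sk Ck Hm) as [X1 X2].
  fold u in X1, X2.
  assert (P1 : RInt (fun s => u2 s ^ 2) 0 1 <=
     RInt (fun s => 2 * (u2 s + K ^ 2 * u s) ^ 2 + (2 * K ^ 4) * u s ^ 2) 0 1).
  { apply RInt_le_c; try lra. intros; cont. intros; cont.
    intros x _. pose proof (pow2_ge_0 (u2 x + 2 * K ^ 2 * u x)). nra. }
  rewrite RInt_plusR, !RInt_scalR in P1 by (apply exRI; intros; cont).
  assert (K4 : 0 <= 2 * K ^ 4) by (pose proof (pow2_ge_0 (K ^ 2)); nra).
  assert (KK : 0 < K ^ 2) by (pose proof (Rsqr_pos_lt K HK0) as Q; unfold Rsqr in Q; simpl; lra).
  set (E := Energy m gx gy) in *.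
  set (Xc := RInt (fun s => u s * cos (K * s)) 0 1) in *. clearbody Xc. change R in Xc.
  set (Xs := RInt (fun s => u s * sin (K * s)) 0 1) in *. clearbody Xs. change R in Xs.
  set (Iu := RInt (fun s => u s ^ 2) 0 1) in *. clearbody Iu. change R in Iu.
  set (Iu2 := RInt (fun s => u2 s ^ 2) 0 1) in *. clearbody Iu2. change R in Iu2.
  set (Phi := RInt (fun s => (u2 s + K ^ 2 * u s) ^ 2) 0 1) in *. clearbody Phi. change R in Phi.
  assert (O2 : 2 * K ^ 4 * Iu <= 2 * K ^ 4 * (68 / K ^ 2 * Phi + 16 * (Xc ^ 2 + Xs ^ 2))) by (apply Rmult_le_compat_l; auto).
  replace (2 * K ^ 4 * (68 / K ^ 2 * Phi + 16 * (Xc ^ 2 + Xs ^ 2))) with (136 * K ^ 2 * Phi + 32 * K ^ 4 * (Xc ^ 2 + Xs ^ 2)) in O2 by (field; lra).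
  assert (S2 : 32 * K ^ 4 * (Xc ^ 2 + Xs ^ 2) <= 32 * K ^ 4 * (2 * ((K ^ 4) ^ m * K ^ 2 * (2 * E) ^ 2))) by (apply Rmult_le_compat_l; [nra | lra]).
  replace (32 * K ^ 4 * (2 * ((K ^ 4) ^ m * K ^ 2 * (2 * E) ^ 2))) with (256 * K ^ 6 * (K ^ 4) ^ m * E ^ 2) in S2 by ring.
  lra.
Qed.

Theorem mainTheorem7 (omega : Z) (homega : omega <> 0%Z) :
  exists c : R, 0 < c /\
  forall m : nat, (1 <= m)%nat ->
  exists C : R, 0 < C /\
    forall gx gy : R -> R,
      closed_unit_length_arclength_curve gx gy ->
      turning_number gx gy = IZR omega ->
      RInt (fun s => (F0 m omega gx gy s) ^ 2) 0 1
        >= c * Pterm m gx gy - C * (Energy m gx gy) ^ 2.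
Proof.
  destruct (Kfacts omega homega) as [HK0 [Sk Ck]].
  assert (KK : 0 < (2 * PI * IZR omega) ^ 2).
  { pose proof (Rsqr_pos_lt _ HK0) as Q. unfold Rsqr in Q. simpl. lra. }
  assert (HA : 0 < 2 + 136 * (2 * PI * IZR omega) ^ 2) by lra.
  exists (1 / (2 + 136 * (2 * PI * IZR omega) ^ 2)). split.
  { apply Rdiv_lt_0_compat; lra. }
  intros m Hm.
  assert (HB : 0 <= 256 * (2 * PI * IZR omega) ^ 6 * ((2 * PI * IZR omega) ^ 4) ^ m).
  { apply Rmult_le_pos. apply Rmult_le_pos. lra.
    replace ((2 * PI * IZR omega) ^ 6) with (((2 * PI * IZR omega) ^ 2) ^ 3) by ring. apply pow_le; lra.
    apply pow_le. replace ((2 * PI * IZR omega) ^ 4) with (((2 * PI * IZR omega) ^ 2) ^ 2) by ring. apply pow_le; lra. }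
  exists (256 * (2 * PI * IZR omega) ^ 6 * ((2 * PI * IZR omega) ^ 4) ^ m / (2 + 136 * (2 * PI * IZR omega) ^ 2) + 1).
  split.
  { assert (0 <= 256 * (2 * PI * IZR omega) ^ 6 * ((2 * PI * IZR omega) ^ 4) ^ m / (2 + 136 * (2 * PI * IZR omega) ^ 2)).
    { apply Rmult_le_pos; auto. apply Rlt_le, Rinv_0_lt_compat; auto. }
    lra. }
  intros gx gy H Ht.
  assert (HK : RInt (curvature gx gy) 0 1 = 2 * PI * IZR omega).
  { unfold turning_number in Ht. pose proof PI_RGT_0. rewrite <- Ht. fixeq. rint_atoms. field. lra. }
  pose proof (main_bound gx gy _ m H HK HK0 Sk Ck Hm) as M.
  unfold Pterm. replace (2 * m + 2)%nat with (S (S (2 * m))) by lia.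
  rewrite (RInt_ext (fun s => F0 m omega gx gy s ^ 2)
     (fun s => (kd gx gy (S (S (2 * m))) s + (2 * PI * IZR omega) ^ 2 * kd gx gy (2 * m) s) ^ 2)).
  2:{ intros x _. unfold F0. replace (2 * m + 2)%nat with (S (S (2 * m))) by lia.
      rewrite Rpow_mult_distr, m1sq. fixeq; ring. }
  set (K := 2 * PI * IZR omega) in *. clearbody K.
  set (E := Energy m gx gy) in *.
  set (Phi := RInt (fun s => (kd gx gy (S (S (2 * m))) s + K ^ 2 * kd gx gy (2 * m) s) ^ 2) 0 1) in *. clearbody Phi. change R in Phi.
  set (P := RInt (fun s => kd gx gy (S (S (2 * m))) s ^ 2) 0 1) in *. clearbody P. change R in P.
  set (A := 2 + 136 * K ^ 2) in *. set (B := 256 * K ^ 6 * (K ^ 4) ^ m) in *.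
  clearbody A B.
  assert (M2 : 1 / A * P <= 1 / A * (A * Phi + B * E ^ 2)).
  { apply Rmult_le_compat_l; auto. apply Rlt_le, Rdiv_lt_0_compat; lra. }
  replace (1 / A * (A * Phi + B * E ^ 2)) with (Phi + B / A * E ^ 2) in M2 by (field; lra).
  pose proof (pow2_ge_0 E).
  assert (T : (B / A + 1) * E ^ 2 = B / A * E ^ 2 + E ^ 2) by ring.
  apply Rle_ge. rewrite Rmult_minus_distr_l || idtac. lra.
Qed.
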